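(* Let $X_1,\dots,X_n$ be i.i.d. real random variables whose common distribution is symmetric about an unknown $\mu\in\mathbb{R}$ (i.e. $X_1-\mu$ and $\mu-X_1$ have the same distribution). Fix integers $k\le n$ and $1\le r\le m$, and let $R(\theta)$ be the one-sided resampled median-of-means rank defined in the context. Then $$\mathbb{P}\big(R(\mu)>m-r\big)=\frac{r}{m}.$$
   Context: Blocks: for $\ell=1,\dots,k$ let $B_\ell=\{i\in[n]: i\equiv \ell \pmod k\}$, so each $|B_\ell|\ge \lfloor n/k\rfloor$. Median: for reals $y_1,\dots,y_k$ with order statistics $y_{(1)}\le\dots\le y_{(k)}$, $\mathrm{med}(y_1,\dots,y_k)=y_{(k/2)}$ if $k$ is even and $y_{(\lfloor k/2\rfloor+1)}$ if $k$ is odd. Median-of-means: for $x=(x_1,\dots,x_n)$, $\widehat\mu(x)=\mathrm{med}\big(\frac{1}{|B_1|}\sum_{i\in B_1}x_i,\dots,\frac{1}{|B_k|}\sum_{i\in B_k}x_i\big)$. Randomization: $\{\alpha_{i,j}\}_{i\in[n],j\in[m-1]}$ are i.i.d. Rademacher signs ($\pm1$ with probability $1/2$) independent of the data, and $\pi$ is a uniformly random permutation of $\{0,1,\dots,m-1\}$ independent of the data and of the signs. For $\theta\in\mathbb{R}$: $\mathcal{D}_0(\theta)=(X_1,\dots,X_n)$ and $\mathcal{D}_j(\theta)=(\alpha_{1,j}(X_1-\theta)+\theta,\dots,\alpha_{n,j}(X_n-\theta)+\theta)$ for $j\in[m-1]$ (the same signs are used for every $\theta$). Reference variables: $S_j(\theta)=\widehat\mu(\mathcal{D}_j(\theta))-\theta$,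 $j=0,\dots,m-1$. Tie-broken order: $S_j(\theta)\prec_\pi S_l(\theta)$ iff $S_j(\theta)<S_l(\theta)$, or $S_j(\theta)=S_l(\theta)$ and $\pi(j)<\pi(l)$. Rank: $R(\theta)=1+\sum_{j=1}^{m-1}\mathbb{I}\big(S_0(\theta)\prec_\pi S_j(\theta)\big)$. *)

(* Defs.v *)
From HB Require Import structures.
From mathcomp Require Import all_boot all_order all_algebra.
From mathcomp Require Import fingroup perm.
From mathcomp Require Import all_classical all_reals all_analysis.
Set Implicit Arguments. Unset Strict Implicit. Unset Printing Implicit Defensive.
Import Order.TTheory GRing.Theory Num.Theory.
Local Open Scope ring_scope.

Section MedianOfMeans.
Variable R : realType.

(* med(y_1..y_k) = y_(k/2) if k even, y_(floor(k/2)+1) if k odd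
   (1-based order statistics; nth below is 0-based). *)
Definition median (s : seq R) : R :=
  let k := size s in
  nth 0 (sort <=%R s) (if odd k then k./2 else k./2 - 1)%N.

(* B_l = { i in [n] : i = l mod k }, with i in [n] represented by i' : 'I_n,
   i = i'+1, and l in {1,..,k}. *)
Definition block (n k l : nat) : seq 'I_n :=
  [seq i : 'I_n <- enum 'I_n | ((nat_of_ord i).+1 %% k == l %% k)%N].

Definition block_mean (n k : nat) (x : 'I_n -> R) (l : nat) : R :=
  (size (block n k l))%:R^-1 * \sum_(i <- block n k l) x i.

Definition mom (n k : nat) (x : 'I_n -> R) : R :=
  median [seq block_mean k x l | l <- iota 1 k].

Definition resample (n : nat) (a : 'I_n -> R) (x : 'I_n -> R) (theta : R) : 'I_n -> R :=
  fun i => a i * (x i - theta) + theta.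

Definition perm_at (m : nat) (s : {perm 'I_m}) (j : nat) : nat :=
  if (insub j : option 'I_m) is Some o then nat_of_ord (s o) else j.

Definition prec_tb (a b : R) (pa pb : nat) : bool :=
  (a < b) || ((a == b) && (pa < pb)%N).

Definition S0 (n k : nat) (x : 'I_n -> R) (theta : R) : R := mom k x - theta.

(* S_{j+1}(theta), for j : 'I_(m-1) (resample index j+1 in [m-1]) *)
Definition Sj (n k m : nat) (x : 'I_n -> R) (alpha : 'I_n -> 'I_m.-1 -> R)
  (theta : R) (j : 'I_m.-1) : R :=
  mom k (resample (fun i => alpha i j) x theta) - theta.

Definition rank (n k m : nat) (x : 'I_n -> R) (alpha : 'I_n -> 'I_m.-1 -> R)
  (pi : {perm 'I_m}) (theta : R) : nat :=
  (1 + \sum_(j < m.-1)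
        prec_tb (S0 k x theta) (Sj k x alpha theta j) (perm_at pi 0) (perm_at pi j.+1))%N.

End MedianOfMeans.

(* Main.v *)
Require Import Defs.
From HB Require Import structures.
From mathcomp Require Import all_boot all_order all_algebra.
From mathcomp Require Import fingroup perm.
From mathcomp Require Import all_classical all_reals all_analysis.
From mathcomp Require Import zify ring lra.
Import Order.TTheory GRing.Theory Num.Theory.
Local Open Scope classical_set_scope.
Local Open Scope ring_scope.
Set Implicit Arguments. Unset Strict Implicit. Unset Printing Implicit Defensive.

Lemma count_top (m r : nat) (rho : 'I_m -> nat) :
  injective rho -> (forall i, (rho i < m)%N) -> (r <= m)%N ->
  (\sum_(i < m) (m - r <= rho i)%N : nat)%N = r.
Proof.
move=> inj lt rm.
pose f i := Ordinal (lt i).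
have finj : injective f by move=> i j /(congr1 val) /= /inj.
transitivity (\sum_(i < m) (m - r <= i)%N : nat)%N.
  by rewrite [RHS](reindex_inj finj).
rewrite -(big_mkord xpredT (fun i => (m - r <= i)%N : nat)).
rewrite (@big_cat_nat _ _ _ (m - r)) /=; [|by []|exact: leq_subr].
rewrite big_nat_cond big1; last first.
  by move=> i /andP[/andP[_ h] _]; rewrite leqNgt h.
rewrite add0n big_nat_cond (eq_bigr (fun _ => 1%N)); last first.
  by move=> i /andP[/andP[h _] _]; rewrite h.
rewrite -big_nat_cond sum_nat_const_nat; lia.
Qed.

Lemma top_rank (m r : nat) (p : 'I_m -> 'I_m -> bool) :
  (forall i, p i i = false) ->
  (forall i l, i != l -> p i l || p l i) ->
  (forall i l q, p i l -> p l q -> p i q) ->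
  (r <= m)%N ->
  (\sum_(i < m) (m - r <= \sum_(l < m) (p i l : nat))%N : nat)%N = r.
Proof.
move=> irr tot tr rm.
pose rho i := (\sum_(l < m) (p i l : nat))%N.
have rhoE i : rho i = #|[pred l | p i l]|.
  by rewrite -sum1_card big_mkcond /=; apply: eq_bigr => l _; rewrite inE; case: (p i l).
have lt_of i l : p i l -> (rho l < rho i)%N.
  move=> pil; rewrite !rhoE; apply: proper_card; apply/properP; split.
    by apply/fintype.subsetP => q; rewrite !inE => plq; exact: tr pil plq.
  by exists l; rewrite !inE ?irr ?pil.
apply: (@count_top m r rho) => //.
- move=> i l eq; apply/eqP; apply/negPn/negP => ne.
  case/orP: (tot i l ne) => h; have := lt_of _ _ h; rewrite eq ltnn //.
- move=> i; rewrite rhoE; rewrite -[X in (_ < X)%N]card_ord; apply: proper_card.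
  apply/properP; split; first exact/fintype.subsetP.
  by exists i => //; rewrite inE irr.
Qed.
Section CountK.
Variable R : realType.

Lemma prec_irr (x : R) (a : nat) : prec_tb x x a a = false.
Proof. by rewrite /prec_tb ltxx eqxx ltnn. Qed.

Lemma prec_tot (x y : R) (a b : nat) : a != b -> prec_tb x y a b || prec_tb y x b a.
Proof.
move=> ab; rewrite /prec_tb; case: (ltgtP x y) => //= _.
by rewrite -neq_ltn.
Qed.

Lemma prec_trans (x y z : R) (a b c : nat) :
  prec_tb x y a b -> prec_tb y z b c -> prec_tb x z a c.
Proof.
rewrite /prec_tb => /orP[xy|/andP[/eqP<- ab]] /orP[yz|/andP[/eqP<- bc]].
- by rewrite (lt_trans xy yz).
- by rewrite xy.
- by rewrite yz.
- by rewrite eqxx (ltn_trans ab bc) orbT.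
Qed.

Lemma countK (W : finType) (v : W -> R) (m' r : nat) (op : W -> W -> W) :
  (forall e, injective (op ^~ e)) -> (r <= m'.+1)%N ->
  (m'.+1 * \sum_(e : W) \sum_(a : {ffun 'I_m' -> W}) \sum_(s : {perm 'I_m'.+1})
     (m'.+1 - r < 1 + \sum_(j < m') (prec_tb (v e) (v (op (a j) e)) (s ord0) (s (lift ord0 j)) : nat))%N
   = r * #|W| ^ m'.+1 * m'.+1`!)%N.
Proof.
move=> opinj rm; set m := m'.+1.
pose G (e : W) (b : {ffun 'I_m' -> W}) := (\sum_(s : {perm 'I_m})
     (m - r < 1 + \sum_(j < m') (prec_tb (v e) (v (b j)) (s ord0) (s (lift ord0 j)) : nat))%N)%N.
have step1 e : (\sum_(a : {ffun 'I_m' -> W}) \sum_(s : {perm 'I_m})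
     (m - r < 1 + \sum_(j < m') (prec_tb (v e) (v (op (a j) e)) (s ord0) (s (lift ord0 j)) : nat))%N
     = \sum_b G e b)%N.
  pose h (a : {ffun 'I_m' -> W}) := [ffun j => op (a j) e].
  have hinj : injective h.
    move=> a1 a2 /ffunP H; apply/ffunP => j; have := H j; rewrite !ffunE; exact: opinj.
  rewrite [RHS](reindex_inj hinj); apply: eq_bigr => a _; apply: eq_bigr => s _.
  by congr (_ < 1 + _)%N; apply: eq_bigr => j _; rewrite ffunE.
under eq_bigr do rewrite step1.
pose Rk (c : {ffun 'I_m -> W}) (s : {perm 'I_m}) (i : 'I_m) :=
  (\sum_(l < m) (prec_tb (v (c i)) (v (c l)) (s i) (s l) : nat))%N.
pose S i := (\sum_(c : {ffun 'I_m -> W}) \sum_(s : {perm 'I_m}) (m - r < 1 + Rk c s i)%N : nat)%N.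
have step2 : (\sum_e \sum_b G e b)%N = S ord0.
  rewrite pair_big /=.
  pose h (c : {ffun 'I_m -> W}) := (c ord0, [ffun j => c (lift ord0 j)]).
  pose h' (p : W * {ffun 'I_m' -> W}) : {ffun 'I_m -> W} :=
    [ffun l => if unlift ord0 l is Some j then p.2 j else p.1].
  have hb : bijective h.
    exists h'.
      move=> c; apply/ffunP => l; rewrite ffunE /=.
      by case: unliftP => [j|] ->; rewrite ?ffunE.
    move=> [e b]; rewrite /h /h' /= ffunE unlift_none; congr (_, _).
    by apply/ffunP => j; rewrite !ffunE liftK.
  rewrite (reindex h) /=; last by apply: onW_bij.
  apply: eq_bigr => c _; apply: eq_bigr => s _; rewrite /Rk big_ord_recl /= prec_irr add0n.
  by congr (_ < 1 + _)%N; apply: eq_bigr => j _; rewrite ffunE.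
have step3 i : S ord0 = S i.
  pose t := tperm ord0 i.
  rewrite /S !pair_big /=.
  pose h (p : {ffun 'I_m -> W} * {perm 'I_m}) := ([ffun l => p.1 (t l)], (t * p.2)%g).
  have hinj : injective h.
    move=> [c1 s1] [c2 s2] [/ffunP H1 /mulgI H2]; congr (_, _) => //.
    apply/ffunP => l; have := H1 (t l); rewrite !ffunE tpermK //.
  rewrite (reindex_inj hinj); apply: eq_bigr => -[c s] _ /=.
  congr (_ < 1 + _)%N; rewrite /Rk ffunE permM tpermL.
  rewrite [RHS](reindex_inj (@perm_inj _ t)); apply: eq_bigr => l _.
  by rewrite ffunE permM.
rewrite step2.
have -> : (m * S ord0 = \sum_(i < m) S i)%N.
  by rewrite (eq_bigr (fun _ => S ord0)) ?sum_nat_const ?card_ord // => i _; rewrite step3.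
rewrite /S exchange_big /=.
rewrite (eq_bigr (fun _ => #|{perm 'I_m}| * r)%N); last first.
  move=> c _; rewrite exchange_big /= -sum_nat_const; apply: eq_bigr => s _.
  rewrite -[RHS](@top_rank m r (fun i l => prec_tb (v (c i)) (v (c l)) (s i) (s l))) //.
  - move=> i0; exact: prec_irr.
  - move=> i0 l nil; apply: prec_tot; apply/eqP => /val_inj/perm_inj/eqP; exact/negP.
  - move=> ? ? ?; exact: prec_trans.
rewrite sum_nat_const card_ffun card_ord card_Sn; move: (#|W| ^ m)%N (m`!) => x y; nia.
Qed.
End CountK.
Section Meas.
Variable R : realType.

Lemma sorted_nth_count (t : seq R) (p : pred R) j :
  sorted <=%R t -> (forall x y, x <= y -> p y -> p x) -> (j < size t)%N ->
  p (nth 0 t j) = (j < count p t)%N.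
Proof.
move=> + pdown; elim: t j => [|x t IH] j //= st.
have st' : sorted <=%R t := path_sorted st.
have allx : all (fun y => x <= y) t := order_path_min le_trans st.
have c0 : ~~ p x -> count p t = 0%N.
  move=> px; apply/eqP; rewrite -leqn0 leqNgt -has_count; apply/hasPn => y yt.
  by apply/negP => py; move: px; rewrite (pdown x y (allP allx y yt) py).
case: j => [|j] /= jlt.
  case px: (p x) => //=; by rewrite c0 ?px.
rewrite IH //; case px: (p x) => /=; first by rewrite add1n ltnS.
by rewrite c0 ?px.
Qed.

Context d (T : measurableType d).

Lemma measurable_b2n (b : T -> bool) : measurable_fun setT b ->
  measurable_fun setT (fun t => nat_of_bool (b t)).
Proof. by move=> mb; apply: (measurableT_comp (f := nat_of_bool)) => //. Qed.

Lemma measurable_sumn (I : Type) (s : seq I) (P : pred I) (h : I -> T -> nat) :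
  (forall i, measurable_fun setT (h i)) ->
  measurable_fun setT (fun t => \sum_(i <- s | P i) h i t)%N.
Proof.
move=> mh; elim: s => [|x s IH].
  by under eq_fun do rewrite big_nil; exact: measurable_cst.
under eq_fun do rewrite big_cons; case: (P x) => //.
exact: measurable_realfun.measurable_fun_addn.
Qed.

Lemma measurable_nat_set (h : T -> nat) (A : set nat) : measurable_fun setT h ->
  measurable [set t | A (h t)].
Proof. by move=> mh; rewrite -[X in measurable X]setTI; exact: mh. Qed.

Lemma measurable_allseq (I : eqType) (s : seq I) (F : I -> set T) :
  (forall i, measurable (F i)) -> measurable [set t | forall i, i \in s -> F i t].
Proof.
move=> mF; elim: s => [|x s IH].
  by rewrite (_ : [set t | _] = setT) //; apply/seteqP; split => t //= _ i.
rewrite (_ : [set t | _] = F x `&` [set t | forall i, i \in s -> F i t]).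
  exact: measurableI.
apply/seteqP; split => t /=.
  by move=> H; split; [apply: H; rewrite inE eqxx | move=> i iS; apply: H; rewrite inE iS orbT].
by move=> [Fx H] i; rewrite inE => /orP[/eqP->//|]; exact: H.
Qed.

Lemma measurable_exseq (I : eqType) (s : seq I) (F : I -> set T) :
  (forall i, measurable (F i)) -> measurable [set t | exists i, i \in s /\ F i t].
Proof.
move=> mF; elim: s => [|x s IH].
  by rewrite (_ : [set t | _] = set0) //; apply/seteqP; split => t //= [i []].
rewrite (_ : [set t | _] = F x `|` [set t | exists i, i \in s /\ F i t]).
  exact: measurableU.
apply/seteqP; split => t /=.
  move=> [i []]; rewrite inE => /orP[/eqP-> Fx|iS Fi]; [by left|by right; exists i].
by move=> [Fx|[i [iS Fi]]]; [exists x; rewrite inE eqxx | exists i; rewrite inE iS orbT].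
Qed.

Lemma measurable_count (L : seq nat) (b : nat -> T -> bool) :
  (forall l, measurable_fun setT (b l)) ->
  measurable_fun setT (fun t => count (b ^~ t) L).
Proof.
move=> mb; elim: L => [|x L IH] /=; first exact: measurable_cst.
by apply: measurable_realfun.measurable_fun_addn => //; exact: measurable_b2n.
Qed.

Lemma measurable_nth_sort (F : nat -> T -> R) (L : seq nat) j :
  (forall l, measurable_fun setT (F l)) ->
  measurable_fun setT (fun t => nth 0 (sort <=%R [seq F l t | l <- L]) j).
Proof.
move=> mF; case: (ltnP j (size L)) => jL; last first.
  under eq_fun do rewrite nth_default ?size_sort ?size_map //.
  exact: measurable_cst.
apply: (measurability _ (measurable_realfun.RGenInftyO.measurableE R)) => //.
move=> _ [_ [c ->] <-].
rewrite (_ : _ `&` _ = [set t | (j < count (fun l => (F l t < c)%R) L)%N]).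
  apply: (@measurable_nat_set (fun t => count (fun l => (F l t < c)%R) L) (fun x => (j < x)%N)).
  apply: measurable_count => l.
  by apply: measurable_realfun.measurable_fun_ltr => //; exact: measurable_cst.
apply/seteqP; split => t /=.
- move=> [_]; rewrite /= in_itv /=.
  rewrite (@sorted_nth_count _ (fun x => x < c)) ?size_sort ?size_map ?count_sort ?count_map //.
  + by apply: sort_sorted => x y; exact: le_total.
  + by move=> x y xy yc; exact: le_lt_trans xy yc.
- move=> h; split => //=; rewrite in_itv /=.
  rewrite (@sorted_nth_count _ (fun x => x < c)) ?size_sort ?size_map ?count_sort ?count_map //.
  + by apply: sort_sorted => x y; exact: le_total.
  + by move=> x y xy yc; exact: le_lt_trans xy yc.
Qed.

End Meas.
Definition vec (R : realType) n := 'I_n -> R.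
HB.instance Definition _ (R : realType) n := Choice.on (vec R n).
HB.instance Definition _ (R : realType) n := isPointed.Build (vec R n) (fun _ => 0).
Definition Rect (R : realType) n : set (set (vec R n)) :=
  [set A | exists B : 'I_n -> set R, (forall i, measurable (B i)) /\
     A = [set y | forall i, B i (y i)]].
Arguments Rect : clear implicits.
Definition Vt (R : realType) n := g_sigma_algebraType (Rect R n).

Definition gfun (R : realType) n k (mu : R) (y : 'I_n -> R) : R :=
  mom k (fun i => y i + mu) - mu.

Section Meas2.
Variable R : realType.

Lemma mproj n (i : 'I_n) : measurable_fun setT (fun y : Vt R n => y i).
Proof.
move=> _ B mB; rewrite setTI; apply: sub_sigma_algebra.
exists (fun i' => if i' == i then B else setT); split.
  by move=> i'; case: (i' == i) => //; exact: measurableT.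
apply/seteqP; split => y /=.
  by move=> yB i'; case: eqP => [->|] //.
by move=> H; have := H i; rewrite eqxx.
Qed.

Lemma mvec d (T : measurableType d) n (h : 'I_n -> T -> R) :
  (forall i, measurable_fun setT (h i)) ->
  measurable_fun setT ((fun t => (fun i => h i t)) : T -> Vt R n).
Proof.
move=> mh; apply: (@measurability _ _ T (Vt R n) setT _ (Rect R n) erefl).
move=> _ [A [B [mB ->]] <-].
rewrite (_ : _ `&` _ = [set t | forall i, i \in enum 'I_n -> (h i @^-1` B i) t]).
  apply: measurable_allseq => i; rewrite -[X in measurable X]setTI; exact: mh.
apply/seteqP; split => t /=.
  by move=> [_ H] i _; exact: H.
by move=> H; split => // i; apply: H; rewrite mem_enum.
Qed.

Lemma mgfun n k (mu : R) : measurable_fun setT (fun y : Vt R n => gfun k mu y).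
Proof.
rewrite (_ : (fun y : Vt R n => gfun k mu y) = (fun y : Vt R n =>
   nth 0 (sort <=%R [seq (fun l (y : Vt R n) => block_mean k (fun i => y i + mu) l) l y | l <- iota 1 k])
     (if odd k then k./2 else k./2 - 1)%N - mu)).
  apply: measurable_realfun.measurable_funB; last exact: measurable_cst.
  apply: measurable_nth_sort => l; rewrite /block_mean.
  apply: measurable_realfun.measurable_funM; first exact: measurable_cst.
  apply: measurable_sum => i.
  apply: measurable_realfun.measurable_funD; last exact: measurable_cst.
  exact: mproj.
by apply: funext => y; rewrite /gfun /mom /median size_map size_iota.
Qed.

Lemma mrankset d (T : measurableType d) (m' r0 : nat) (f0 : T -> R) (f : 'I_m' -> T -> R)
  (p0 : nat) (p : 'I_m' -> nat) :
  measurable_fun setT f0 -> (forall j, measurable_fun setT (f j)) ->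
  measurable [set t | (r0 < 1 + \sum_(j < m') (prec_tb (f0 t) (f j t) p0 (p j) : nat))%N].
Proof.
move=> mf0 mf.
apply: (@measurable_nat_set _ _ (fun t => 1 + \sum_(j < m') (prec_tb (f0 t) (f j t) p0 (p j) : nat))%N
   (fun x => (r0 < x)%N)).
apply: measurable_realfun.measurable_fun_addn; first exact: measurable_cst.
apply: measurable_sumn => j; apply: measurable_b2n; rewrite /prec_tb.
apply: measurable_or; first exact: measurable_realfun.measurable_fun_ltr.
apply: measurable_and; first exact: measurable_realfun.measurable_fun_eqr.
exact: measurable_cst.
Qed.

End Meas2.
Section Lam.
Context (R : realType) d (T : measurableType d) (P : probability T R) (n : nat).
Variables (Yv Zv : T -> Vt R n).
Hypotheses (mY : measurable_fun setT Yv) (mZ : measurable_fun setT Zv).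
Variables (U : set T) (mU : measurable U) (c : {nonneg R}).
Hypothesis rect : forall B : 'I_n -> set R, (forall i, measurable (B i)) ->
   P (Yv @^-1` [set y | forall i, B i (y i)] `&` U) =
   ((c%:num)%:E * P (Zv @^-1` [set y | forall i, B i (y i)]))%E.

Lemma lam (A : set (Vt R n)) : measurable A ->
  P (Yv @^-1` A `&` U) = ((c%:num)%:E * P (Zv @^-1` A))%E.
Proof.
move=> mA.
pose m1 := @measure_function_pushforward__canonical__measure_function_Measure _ _ _ _ _
  (mrestr P mU) _ mY.
pose m2 := mscale c (@measure_function_pushforward__canonical__measure_function_Measure _ _ _ _ _
  P _ mZ).
have := @measure_unique _ R (Vt R n) (Rect R n) (fun _ => setT) erefl _ _ _ m1 m2 _ _ A mA.
apply.
- move=> _ _ [B1 [mB1 ->]] [B2 [mB2 ->]].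
  exists (fun i => B1 i `&` B2 i); split; first by move=> i; exact: measurableI.
  apply/seteqP; split => y /=.
    by move=> [H1 H2] i; split; [exact: H1|exact: H2].
  by move=> H; split => i; have [] := H i.
- move=> _; exists (fun _ => setT); split; first by move=> i; exact: measurableT.
  by apply/seteqP; split => y.
- by apply/seteqP; split => x // _; exists 0%N.
- move=> _ [B [mB ->]]; exact: rect.
- move=> _; rewrite /m1 /= /pushforward /mrestr.
  apply: (le_lt_trans (probability_le1 _ _)); last exact: ltry.
  apply: measurableI => //; rewrite -[X in measurable X]setTI; exact: mY.
Qed.
End Lam.
Definition sg (R : realType) (b : bool) : R := if b then -1 else 1.
Arguments sg {R}.
Definition flip (R : realType) n (e : {ffun 'I_n -> bool}) (y : 'I_n -> R) : 'I_n -> R :=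
  fun i => sg (e i) * y i.
Definition rk (R : realType) n k m' (mu : R) (y : 'I_n -> R)
  (a : {ffun 'I_m' -> {ffun 'I_n -> bool}}) (s : {perm 'I_m'.+1}) : nat :=
  (1 + \sum_(j < m') (prec_tb (gfun k mu y) (gfun k mu (flip (a j) y))
      (s ord0) (s (lift ord0 j)) : nat))%N.

Lemma perm_at_ord (m : nat) (s : {perm 'I_m}) (o : 'I_m) : perm_at s o = s o.
Proof. by rewrite /perm_at valK. Qed.

Lemma flip_flip (R : realType) n (a e : {ffun 'I_n -> bool}) (y : 'I_n -> R) :
  flip a (flip e y) = flip [ffun i => a i (+) e i] y.
Proof.
apply: funext => i; rewrite /flip ffunE /sg.
by case: (a i); case: (e i); rewrite /= ?mulN1r ?mul1r ?opprK.
Qed.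

Lemma measure_big_disj d (T : measurableType d) (R : realType)
  (mu : {measure set T -> \bar R}) (I : choiceType) (s : seq I) (F : I -> set T) :
  uniq s -> (forall i, measurable (F i)) ->
  (forall i j, i != j -> F i `&` F j = set0) ->
  mu (\big[setU/set0]_(i <- s) F i) = (\sum_(i <- s) mu (F i))%E.
Proof.
move=> + mF Fdisj; elim: s => [|x s IH] /=; first by rewrite !big_nil measure0.
move=> /andP[xs us]; rewrite !big_cons.
have m2 : measurable (\big[setU/set0]_(i <- s) F i) by apply: bigsetU_measurable => i _.
have dj : F x `&` \big[setU/set0]_(i <- s) F i = set0.
  apply/seteqP; split => t // [Fx]. rewrite -bigcup_seq => -[i /= iS Fi].
  have ix : x != i by apply: contraNneq xs => ->.
  have : (F x `&` F i) t by split.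
  by rewrite (Fdisj x i ix).
by rewrite measureU //; congr (_ + _)%E; exact: (IH us).
Qed.

Lemma sum_indic_const d (T : measurableType d) (R : realType) (P : probability T R)
  (J : finType) (b : J -> T -> bool) (K : R) :
  (forall j, measurable [set t | b j t]) ->
  (forall t, ((\sum_(j : J) (b j t : nat))%N)%:R = K) ->
  (\sum_(j : J) P [set t | b j t] = K%:E)%E.
Proof.
move=> mb hK.
transitivity (\int[P]_x (\sum_(j <- index_enum J) (\1_[set t | b j t] x)%:E))%E.
  rewrite ge0_integral_sum //.
  - by apply: eq_bigr => j _; rewrite integral_indic // setIT.
  - move=> j; apply/measurable_realfun.measurable_EFinP.
    exact: measurable_realfun.measurable_indic.
transitivity (\int[P]_x (cst K%:E x))%E.
  apply: eq_integral => x _; rewrite sumEFin /= -(hK x) natr_sum; congr (_%:E).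
  apply: eq_bigr => j _; rewrite indicE; congr (_%:R).
  case: (boolP (b j x)) => h; first by rewrite mem_set.
  by rewrite memNset //; apply/negP.
rewrite integral_cst //; transitivity (K%:E * 1)%E; [congr (_ * _)%E; exact: probability_setT | exact: mule1].
Qed.

Lemma mpre (R : realType) (f : R -> R) (B : set R) :
  measurable_fun setT f -> measurable B -> measurable [set x | B (f x)].
Proof. by move=> mf mB; rewrite -[X in measurable X]setTI; exact: mf. Qed.

Unset Implicit Arguments. Set Strict Implicit.

Theorem theorem2 (R : realType) (d : measure_display) (T : measurableType d)
  (P : probability T R) (n k m r : nat)
  (X : 'I_n -> T -> R) (alpha : 'I_n -> 'I_m.-1 -> T -> R)
  (pi : T -> {perm 'I_m}) (mu : R) :
  (0 < k <= n)%N -> (1 <= r <= m)%N ->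
  (* measurability of the data, the signs and the permutation *)
  (forall i, measurable_fun setT (X i)) ->
  (forall i j, measurable_fun setT (alpha i j)) ->
  (forall s, measurable (pi @^-1` [set s])) ->
  (* X_1,...,X_n identically distributed *)
  (forall i i' (B : set R), measurable B -> P (X i @^-1` B) = P (X i' @^-1` B)) ->
  (* symmetric about mu: X_i - mu and mu - X_i have the same distribution *)
  (forall i (B : set R), measurable B ->
     P ((fun t => X i t - mu) @^-1` B) = P ((fun t => mu - X i t) @^-1` B)) ->
  (* Rademacher signs *)
  (forall i j, P (alpha i j @^-1` [set 1]) = (2^-1)%:E) ->
  (forall i j, P (alpha i j @^-1` [set -1]) = (2^-1)%:E) ->
  (* uniformly random permutation of {0,...,m-1} *)
  (forall s, P (pi @^-1` [set s]) = ((m`!)%:R^-1)%:E) ->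
  (* mutual independence of all X_i, all alpha_{i,j} and pi *)
  (forall (B : 'I_n -> set R) (C : 'I_n -> 'I_m.-1 -> set R) (S : set {perm 'I_m}),
     (forall i, measurable (B i)) -> (forall i j, measurable (C i j)) ->
     P [set t | (forall i, B i (X i t)) /\ (forall i j, C i j (alpha i j t)) /\ S (pi t)]
     = ((\prod_(i < n) P (X i @^-1` B i))
        * (\prod_(i < n) \prod_(j < m.-1) P (alpha i j @^-1` C i j))
        * P (pi @^-1` S))%E) ->
  P [set t | (m - r <
       rank k (fun i => X i t) (fun i j => alpha i j t) (pi t) mu)%N]
  = (r%:R / m%:R)%:E.
Proof.
case: m alpha pi => [|m'] alpha pi hk hr mX malpha mpi hid hsym ha1 ham1 hpi hind.
  by move: hr => /andP[h1 h2]; lia.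
have one_neqN1 : (1 == -1 :> R) = false by apply/negbTE/eqP => h; lra.
have two_neq0 : (2 : R) != 0 by apply/eqP => h; lra.
have mXmu i : measurable_fun setT (fun t => X i t - mu).
  by apply: measurable_realfun.measurable_funB => //; exact: measurable_cst.
pose Yv : T -> Vt R n := fun t i => X i t - mu.
pose Zv (e : {ffun 'I_n -> bool}) : T -> Vt R n := fun t => flip e (Yv t).
have mYv : measurable_fun setT Yv by exact: (mvec mXmu).
have mZv e : measurable_fun setT (Zv e).
  apply: (mvec (h := fun i t => sg (e i) * (X i t - mu))) => i.
  by apply: measurable_realfun.measurable_funM => //; exact: measurable_cst.
have mflip (e : {ffun 'I_n -> bool}) : measurable_fun setT (fun y : Vt R n => (flip e y : Vt R n)).
  apply: (mvec (h := fun i (y : Vt R n) => sg (e i) * y i)) => i.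
  by apply: measurable_realfun.measurable_funM; [exact: measurable_cst | exact: mproj].
pose piece (a : {ffun 'I_m' -> {ffun 'I_n -> bool}}) (s : {perm 'I_m'.+1}) :=
  [set t | (forall i j, alpha i j t = sg (a j i)) /\ pi t = s].
have mpiece a s : measurable (piece a s).
  rewrite (_ : piece a s = [set t | forall i, i \in enum 'I_n ->
      [set t | forall j, j \in enum 'I_m' -> [set t | alpha i j t = sg (a j i)] t] t]
      `&` pi @^-1` [set s]).
    apply: measurableI => //; apply: measurable_allseq => i.
    apply: measurable_allseq => j; rewrite -[X in measurable X]setTI.
    exact: (malpha i j measurableT [set sg (a j i)] (measurable_set1 _)).
  apply/seteqP; split => t /=.
    by move=> [H1 H2]; split => // i _ j _; exact: H1.
  by move=> [H1 H2]; split => // i j; apply: H1; rewrite mem_enum.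
pose Aset (a : {ffun 'I_m' -> {ffun 'I_n -> bool}}) (s : {perm 'I_m'.+1}) : set (Vt R n) := [set y | (m'.+1 - r < rk k mu y a s)%N].
have mAset a s : measurable (Aset a s).
  apply: (@mrankset R _ (Vt R n) m' (m'.+1 - r) (fun y : Vt R n => gfun k mu y)
     (fun j (y : Vt R n) => gfun k mu (flip (a j) y)) (s ord0) (fun j => s (lift ord0 j))).
    exact: mgfun.
  by move=> j; exact: (measurableT_comp (@mgfun R n k mu) (mflip (a j))).
have rankE t : rank k (fun i => X i t) (fun i j => alpha i j t) (pi t) mu =
  (1 + \sum_(j < m') (prec_tb (gfun k mu (Yv t))
      (gfun k mu (fun i => (alpha i j t * (X i t - mu))%R)) (pi t ord0) (pi t (lift ord0 j)) : nat))%N.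
  rewrite /rank; congr (1 + _)%N; apply: eq_bigr => j _.
  have e0 : S0 k (fun i => X i t) mu = gfun k mu (Yv t).
    by rewrite /S0 /gfun /Yv; congr (mom k _ - mu); apply: funext => i; rewrite subrK.
  have p0 : perm_at (pi t) 0 = pi t ord0 := perm_at_ord (pi t) ord0.
  have pj : perm_at (pi t) j.+1 = pi t (lift ord0 j).
    by have := perm_at_ord (pi t) (lift ord0 j); rewrite lift0.
  by rewrite e0 p0 pj.
have rank_piece t (a : {ffun 'I_m' -> {ffun 'I_n -> bool}}) (s : {perm 'I_m'.+1}) : (forall i j, alpha i j t = sg (a j i)) -> pi t = s ->
    rank k (fun i => X i t) (fun i j => alpha i j t) (pi t) mu = rk k mu (Yv t) a s.
  move=> Ha Hs; rewrite rankE /rk Hs; congr (1 + _)%N; apply: eq_bigr => j _.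
  by congr (prec_tb _ (gfun k mu _) _ _); apply: funext => i; rewrite /flip Ha.
pose E := [set t | (m'.+1 - r < rank k (fun i => X i t) (fun i j => alpha i j t) (pi t) mu)%N].
have mE : measurable E.
  rewrite (_ : E = [set t | exists s, s \in enum {perm 'I_m'.+1} /\
     (pi @^-1` [set s] `&` [set t | (m'.+1 - r < 1 + \sum_(j < m') (prec_tb (gfun k mu (Yv t))
      (gfun k mu (fun i => (alpha i j t * (X i t - mu))%R)) (s ord0) (s (lift ord0 j)) : nat))%N]) t]).
    apply: measurable_exseq => s; apply: measurableI => //.
    apply: (@mrankset R _ T m' (m'.+1 - r) (fun t => gfun k mu (Yv t))
     (fun j t => gfun k mu (fun i => (alpha i j t * (X i t - mu))%R)) (s ord0) (fun j => s (lift ord0 j))).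
      exact: (measurableT_comp (@mgfun R n k mu) mYv).
    move=> j; apply: (measurableT_comp (@mgfun R n k mu)).
    apply: (mvec (h := fun i t => alpha i j t * (X i t - mu))) => i.
    exact: measurable_realfun.measurable_funM.
  apply/seteqP; split => t; rewrite /E /=.
    by move=> Et; exists (pi t); split; [rewrite mem_enum | split => //; rewrite -rankE].
  by move=> [s [_ [/= <- Hs]]]; rewrite rankE.
pose C0 : set R := [set x | x = 1 \/ x = -1].
have mC0 : measurable C0.
  exact: (measurableU _ _ (measurable_set1 (1 : R)) (measurable_set1 (-1 : R))).
pose Gd := [set t | forall i j, alpha i j t = 1 \/ alpha i j t = -1].
have mGd : measurable Gd.
  rewrite (_ : Gd = [set t | forall i, i \in enum 'I_n ->
      [set t | forall j, j \in enum 'I_m' -> (alpha i j @^-1` C0) t] t]).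
    apply: measurable_allseq => i; apply: measurable_allseq => j.
    rewrite -[X in measurable X]setTI; exact: malpha.
  apply/seteqP; split => t /=.
    by move=> H i _ j _; exact: H.
  by move=> H i j; apply: H; rewrite mem_enum.
have PC0 i j : P (alpha i j @^-1` C0) = 1%E.
  rewrite (_ : alpha i j @^-1` C0 = alpha i j @^-1` [set 1] `|` alpha i j @^-1` [set -1]) //.
  rewrite measureU.
  - transitivity (((2:R)^-1)%:E + ((2:R)^-1)%:E)%E; first by congr (_ + _)%E; [exact: ha1 | exact: ham1].
    by rewrite -EFinD; congr (_%:E); lra.
  - by rewrite -[X in measurable X]setTI; apply: malpha => //; exact: measurable_set1.
  - by rewrite -[X in measurable X]setTI; apply: malpha => //; exact: measurable_set1.
  - apply/seteqP; split => t // [/= h1 h2]; by have := one_neqN1; rewrite -h2 -h1 eqxx.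
have PGd : P Gd = 1%E.
  have := hind (fun _ => setT) (fun _ _ => C0) setT (fun _ => measurableT) (fun _ _ => mC0).
  rewrite (_ : [set t | _ /\ _ /\ _] = Gd); last first.
    by apply/seteqP; split => t /=; [move=> [_ [H _]] | move=> H; split => //; split].
  move=> ->; rewrite big1; last by move=> i _; rewrite preimage_setT probability_setT.
  rewrite big1; last by move=> i _; rewrite big1 // => j _; exact: PC0.
  by rewrite preimage_setT probability_setT !mule1.
have PE1 : P E = P (E `&` Gd).
  have PnGd : P (~` Gd) = 0%E by rewrite probability_setC // PGd subee.
  have mEGd : measurable (E `&` Gd) by exact: measurableI.
  have mEnGd : measurable (E `&` ~` Gd) by apply: measurableI => //; exact: measurableC.
  have h0 : P (E `&` ~` Gd) = 0%E.
    apply/eqP; rewrite eq_le measure_ge0 andbT -PnGd.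
    by apply: le_measure => //; rewrite inE //; exact: measurableC.
  rewrite -{1}(setIT E) -(setUv Gd) setIUr measureU //.
    by transitivity (P (E `&` Gd) + 0)%E; [congr (_ + _)%E; exact: h0 | exact: adde0].
  by apply/seteqP; split => t // [[_ g] [_ ng]].
have sg_inj : injective (@sg R).
  move=> [] [] //= h; move: one_neqN1; first by rewrite h eqxx.
  by rewrite -h eqxx.
pose I := ({ffun 'I_m' -> {ffun 'I_n -> bool}} * {perm 'I_m'.+1})%type.
pose F (x : I) := Yv @^-1` Aset x.1 x.2 `&` piece x.1 x.2.
have mF x : measurable (F x).
  apply: measurableI => //; rewrite -[X in measurable X]setTI; exact: mYv.
have EGd : E `&` Gd = \big[setU/set0]_(x <- index_enum I) F x.
  rewrite -bigcup_seq; apply/seteqP; split => t.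
    move=> [Et Gt].
    pose a : {ffun 'I_m' -> {ffun 'I_n -> bool}} := [ffun j => [ffun i => alpha i j t == -1]].
    have Ha : forall i j, alpha i j t = sg (a j i).
      move=> i j; rewrite !ffunE /sg; case: (Gt i j) => ->; by rewrite ?one_neqN1 ?eqxx.
    exists (a, pi t); first by rewrite /= mem_index_enum.
    split; last by split.
    by rewrite /= /Aset /= -(rank_piece t a (pi t) Ha erefl).
  move=> [[a s] _ [HA [Ha Hs]]]; split.
    by rewrite /E /= (rank_piece t a s Ha Hs).
  by move=> i j; rewrite Ha /sg; case: (a j i); [right|left].
have PE2 : P E = \sum_(x : I) P (F x).
  rewrite PE1 EGd measure_big_disj //; first exact: index_enum_uniq.
  move=> [a1 s1] [a2 s2] ne; apply/seteqP; split => t // [[_ [H1 S1]] [_ [H2 S2]]].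
  have e1 : a1 = a2.
    apply/ffunP => j; apply/ffunP => i; apply: sg_inj; by rewrite -H1 -H2.
  have e2 : s1 = s2 by move: S1 S2 => /= <- <-.
  by move: ne; rewrite e1 e2 eqxx.
have c_ge0 : 0 <= ((2:R)^-1)^+(n * m') * (m'.+1`!%:R)^-1.
  by rewrite mulr_ge0 // ?exprn_ge0 // invr_ge0.
pose c : {nonneg R} := NngNum c_ge0.
have Palpha i j b : P (alpha i j @^-1` [set sg b]) = ((2:R)^-1)%:E.
  by case: b => /=; [exact: ham1 | exact: ha1].
have mneg : measurable_fun setT (fun z : R => - z).
  exact: (measurable_realfun.measurable_funN (@measurable_id _ _ setT)).
have symX i (B : set R) : measurable B ->
    P (X i @^-1` [set x | B (- (x - mu))]) = P (X i @^-1` [set x | B (x - mu)]).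
  move=> mB; have mB' : measurable [set z : R | B (- z)] by exact: mpre.
  transitivity (P ((fun t => X i t - mu) @^-1` [set z | B (- z)])); first by [].
  rewrite hsym //; congr (P _); apply/seteqP; split => t /=; by rewrite opprB.
have lamE e (x : I) : P (F x) = ((c%:num)%:E * P (Zv e @^-1` Aset x.1 x.2))%E.
  case: x => a s; rewrite /F /=.
  apply: (@lam R d T P n Yv (Zv e) mYv (mZv e) _ (mpiece a s) c _ _ (mAset a s)).
  move=> B mB.
  have mB1 i : measurable [set x : R | B i (x - mu)].
    apply: mpre (mB i); apply: measurable_realfun.measurable_funB => //; exact: measurable_cst.
  have mB2 i : measurable [set x : R | B i (sg (e i) * (x - mu))].
    apply: mpre (mB i); apply: measurable_realfun.measurable_funM; first exact: measurable_cst.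
    apply: measurable_realfun.measurable_funB => //; exact: measurable_cst.
  have h1 : P [set t | (forall i, [set x | B i (x - mu)%R] (X i t)) /\
       (forall i j, [set sg (a j i)] (alpha i j t)) /\ [set s] (pi t)] =
     ((\prod_(i < n) P (X i @^-1` [set x | B i (x - mu)%R])) *
      (\prod_(i < n) \prod_(j < m') P (alpha i j @^-1` [set sg (a j i)])) *
      P (pi @^-1` [set s]))%E.
    exact: (hind (fun i => [set x | B i (x - mu)%R]) (fun i j => [set sg (a j i)]) [set s]
      mB1 (fun i j => measurable_set1 _)).
  have h2 : P [set t | (forall i, [set x | B i (sg (e i) * (x - mu))%R] (X i t)) /\
       (forall i (j : 'I_m'), setT (alpha i j t)) /\ setT (pi t)] =
     ((\prod_(i < n) P (X i @^-1` [set x | B i (sg (e i) * (x - mu))%R])) *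
      (\prod_(i < n) \prod_(j < m') P (alpha i j @^-1` setT)) *
      P (pi @^-1` setT))%E.
    exact: (hind (fun i => [set x | B i (sg (e i) * (x - mu))%R]) (fun _ _ => setT) setT
      mB2 (fun _ _ => measurableT)).
  rewrite (_ : Yv @^-1` _ `&` piece a s = [set t | (forall i, [set x | B i (x - mu)%R] (X i t)) /\
       (forall i j, [set sg (a j i)] (alpha i j t)) /\ [set s] (pi t)]); last first.
    by apply/seteqP; split => t /=; move=> [H1 [H2 H3]].
  rewrite h1.
  rewrite (_ : Zv e @^-1` _ = [set t | (forall i, [set x | B i (sg (e i) * (x - mu))%R] (X i t)) /\
       (forall i (j : 'I_m'), setT (alpha i j t)) /\ setT (pi t)]); last first.
    by apply/seteqP; split => t /=; [move=> H; split | move=> [H _]].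
  rewrite h2.
  have eqB : (\prod_(i < n) P (X i @^-1` [set x | B i (sg (e i) * (x - mu))%R]) =
      \prod_(i < n) P (X i @^-1` [set x | B i (x - mu)%R]))%E.
    apply: eq_bigr => i _; case: (e i) => /=.
      rewrite -symX //; congr (P _); apply/seteqP; split => t /=; by rewrite mulN1r.
    by congr (P _); apply/seteqP; split => t /=; rewrite mul1r.
  have pa : (\prod_(i < n) \prod_(j < m') P (alpha i j @^-1` [set sg (a j i)]) =
      (((2:R)^-1)^+(n * m'))%:E)%E.
    transitivity (\prod_(i < n) \prod_(j < m') ((2:R)^-1)%:E)%E.
      by apply: eq_bigr => i _; apply: eq_bigr => j _; exact: Palpha.
    rewrite (eq_bigr (fun _ => (((2:R)^-1)^+m')%:E)); last first.
      by move=> i _; rewrite prodEFin prodr_const card_ord.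
    by rewrite prodEFin prodr_const card_ord -exprM mulnC.
  have p1 : (\prod_(i < n) \prod_(j < m') P (alpha i j @^-1` setT) = 1)%E.
    by rewrite big1 // => i _; rewrite big1 // => j _; rewrite preimage_setT probability_setT.
  rewrite eqB pa p1 hpi preimage_setT probability_setT !mule1.
  by rewrite -muleA -EFinM muleC.
pose W := {ffun 'I_n -> bool}.
pose bb (p : W * I) t := (m'.+1 - r < rk k mu (flip p.1 (Yv t)) p.2.1 p.2.2)%N.
pose K : R := ((r * (2 ^ n) ^ m'.+1 * m'.+1`!)%N)%:R / (m'.+1)%:R.
have rle : (r <= m'.+1)%N by case/andP: hr.
have hcount t : ((\sum_(p : W * I) (bb p t : nat))%N)%:R = K.
  pose v := fun w : W => gfun k mu (flip w (Yv t)).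
  pose op := fun (a e : W) => [ffun i => a i (+) e i].
  have opinj e : injective (op ^~ e).
    move=> a1 a2 /ffunP H; apply/ffunP => i; have := H i; rewrite !ffunE.
    by case: (a1 i); case: (a2 i); case: (e i).
  have hc := @countK R W v m' r op opinj rle.
  rewrite card_ffun card_bool card_ord in hc.
  have eS : (\sum_(p : W * I) bb p t = \sum_(e : W) \sum_(a : {ffun 'I_m' -> W})
       \sum_(s : {perm 'I_m'.+1}) (m'.+1 - r < 1 + \sum_(j < m')
        (prec_tb (v e) (v (op (a j) e)) (s ord0) (s (lift ord0 j)) : nat))%N)%N.
    symmetry.
    rewrite (eq_bigr (fun e => \sum_(x : I) (m'.+1 - r < 1 + \sum_(j < m')
        (prec_tb (v e) (v (op (x.1 j) e)) (x.2 ord0) (x.2 (lift ord0 j)) : nat))%N)%N); last first.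
      by move=> e _; rewrite pair_big.
    rewrite pair_big; apply: eq_bigr => -[e [a s]] _.
    rewrite /bb /rk /=; congr (_ < 1 + _)%N; apply: eq_bigr => j _.
    by rewrite flip_flip.
  by rewrite eS /K -hc natrM [RHS]mulrC mulKf // pnatr_eq0.
have mbb p : measurable [set t | bb p t].
  rewrite -[X in measurable X]setTI; exact: (mZv p.1 measurableT _ (mAset p.2.1 p.2.2)).
have sumP := @sum_indic_const d T R P (W * I)%type bb K mbb hcount.
have fin A : measurable A -> P A \is a fin_num by move=> mA; exact: fin_num_measure.
pose q (p : W * I) := fine (P [set t | bb p t]).
have Pq p : P [set t | bb p t] = (q p)%:E by rewrite fineK // fin.
have sq : \sum_(p : W * I) q p = K.
  move: sumP; rewrite (eq_bigr (fun p => (q p)%:E)); last by move=> p _; exact: Pq.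
  by rewrite sumEFin => -[].
pose pE := fine (P E).
have hPE : P E = pE%:E by rewrite fineK // fin.
have he e : c%:num * \sum_(x : I) q (e, x) = pE.
  have : P E = (c%:num * \sum_(x : I) q (e, x))%:E.
    rewrite PE2 (eq_bigr _ (fun x _ => lamE e x)) -ge0_sume_distrr; last first.
      by move=> x _; exact: measure_ge0.
    rewrite (eq_bigr (fun x => (q (e, x))%:E)); last by move=> x _; exact: (Pq (e, x)).
    by rewrite sumEFin EFinM.
  by rewrite hPE => -[<-].
have tot : (2 ^ n)%:R * pE = c%:num * K.
  rewrite -sq -(pair_big xpredT xpredT (fun e x => q (e, x))) /= mulr_sumr.
  rewrite (eq_bigr (fun _ => pE)); last by move=> e _; exact: he.
  by rewrite sumr_const card_ffun card_bool card_ord mulr_natl.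
rewrite hPE; congr (_%:E).
have xnz : ((2 ^ n)%:R : R) != 0 by rewrite pnatr_eq0 expn_eq0.
apply: (mulfI xnz); rewrite tot /K /=.
rewrite exprM !exprVn !natrM !natrX exprS.
field; apply/and3P; split.
- by rewrite nat1r pnatr_eq0.
- by rewrite pnatr_eq0 -lt0n; exact: fact_gt0.
- by apply: expf_neq0; apply: expf_neq0.
Qed.
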